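(* A tree $T$ is a DPDP-tree (a tree that is a DPDP-graph) if and only if $T$ is a spanning supergraph of a 2-subdivision graph $S_2(F)$ (for some function $\alpha$) of a forest $F$ that has neither isolated vertices nor good subgraphs.
   Context: Graphs are finite. A leaf is a vertex of degree one. A set $D\subseteq V(G)$ is dominating if every vertex outside $D$ has a neighbor in $D$; $P$ is paired-dominating if it is dominating and the subgraph induced by $P$ has a perfect matching. A DPDP-graph is a graph $G$ admitting disjoint sets $D,P$ with $V(G)=D\cup P$, $D$ dominating and $P$ paired-dominating. A spanning supergraph of $R$ is a graph with the same vertex set containing all edges of $R$. 2-subdivision graph: for a graph $H$ with no isolated vertex, set of leaves $L_H$, and $\alpha:L_H\to\mathbb{N}=\{1,2,\dots\}$, $S_2(H)$ has vertex set $(V_H\setminus L_H)\cup\{(v,i): v\in L_H, 1\le i\le \alpha(v)\}$ together with two new vertices $u_e,v_e$ for each edge $e=uv$ of $H$. Its edges are: $u_ev_e$ for each edge $e=uv$; for $v\in V_H\setminus L_H$, $vv_e$ for each edge $e$ at $v$; for $v\in L_H$ with incident edge $e$, the edges $v_e(v,i)$, $1\le i\le\alpha(v)$. Good subgraph: Let $Q$ be a subgraph of $H$ without isolated vertices, and $E_Q^-$ the set of edges of $H$ not in $Q$ incident with at least one vertex of $Q$. $Q$ is a good subgraph of $H$ if there exist a set of edges $E$ with $E_Q^-\subseteq E\subseteq E_H\setminus E_Q$ and an orientation $A_E$ of the edges of $E$ (where $d^+(x)$, $d^-(x)$ denote the numbers of arcs of $A_E$ leaving, resp. entering $x$, and $d_H(x)$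 is the degree in $H$) such that the arcs of $A_E$ form a family $\mathcal P=\{P_x: x\in V_Q\}$ of oriented paths indexed by the vertices of $Q$ with: (i) every vertex $v$ of $Q$ is the initial vertex of exactly one path of $\mathcal P$, and $d^+(v)=1$, $d^-(v)=d_H(v)-d_Q(v)-1$; (ii) if $x$ is an inner vertex of a path of $\mathcal P$, then $d^+(x)=1$ and $d^-(x)=d_H(x)-1$; (iii) if $x$ is an end vertex of a path of $\mathcal P$, then $d^-(x)<d_H(x)$. *)

(* Defs.v *)
From mathcomp Require Import all_boot.
Set Implicit Arguments. Unset Strict Implicit. Unset Printing Implicit Defensive.

Section Graphs.
Variable V : finType.
Implicit Types (e : rel V) (A : {set V}).

Definition simple_graph e := symmetric e /\ irreflexive e.

Definition deg e (x : V) : nat := #|[set y | e x y]|.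
Definition indeg e (x : V) : nat := #|[set y | e y x]|.

Definition is_leaf e (x : V) := deg e x = 1.
Definition no_isolated e := forall x : V, 0 < deg e x.

Definition acyclic e := forall p : seq V, 2 < size p -> uniq p -> ~~ cycle e p.
Definition connected e := forall x y : V, connect e x y.

Definition is_forest e := simple_graph e /\ acyclic e.
Definition is_tree e := simple_graph e /\ 0 < #|V| /\ connected e /\ acyclic e.

Definition dominating e A := forall x, x \notin A -> exists2 y, y \in A & e x y.

Definition perfect_matching_of e A (M : {set {set V}}) :=
  (forall m, m \in M -> exists x y, [/\ x \in A, y \in A, e x y & m = [set x; y]]) /\
  (forall x, x \in A -> exists! m, m \in M /\ x \in m).

Definition paired_dominating e A :=
  dominating e A /\ exists M, perfect_matching_of e A M.

Definition DPDP e :=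
  exists D P : {set V}, [/\ [disjoint D & P], D :|: P = setT,
                           dominating e D & paired_dominating e P].

(* A subgraph Q without isolated vertices is given by its (symmetric) edge
   relation q; its vertex set is the set of endpoints of its edges. *)
Definition vQ (q : rel V) (x : V) : bool := [exists y, q x y].

Definition arcs_of (x : V) (p : seq V) : seq (V * V) := zip (x :: p) p.

Definition good_subgraph (e q : rel V) :=
  [/\ (forall x y, q x y -> e x y), symmetric q, (exists x y, q x y) &
  (* a : the orientation A_E; E is the set of underlying edges of a *)
  exists (a : rel V) (P : V -> seq V),
  [/\ (* E subset of E_H \ E_Q, and a is an orientation *)
      (forall x y, a x y -> e x y && ~~ q x y) /\
      (forall x y, a x y -> ~~ a y x),
      (* E_Q^- subset of E *)
      (forall x y, e x y -> ~~ q x y -> vQ q x || vQ q y -> a x y || a y x),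
      (forall x, vQ q x -> [/\ P x != [::], path a x (P x) & uniq (x :: P x)]),
      (forall u w, a u w ->
         #|[set x | vQ q x && ((u, w) \in arcs_of x (P x))]| = 1) &
      [/\
      (forall v, vQ q v -> deg a v = 1 /\ indeg a v + deg q v + 1 = deg e v),
      (forall x y, vQ q x -> y \in P x -> y != last x (P x) ->
         deg a y = 1 /\ indeg a y + 1 = deg e y) &
      (forall x, vQ q x -> indeg a (last x (P x)) < deg e (last x (P x)))]]].

Definition has_good_subgraph e := exists q : rel V, good_subgraph e q.

End Graphs.

(* vertices: original non-leaf vertices, leaf copies (v,i), and for each edge
   e = uv the vertex u_e, represented by the dart (u,v). *)
Inductive s2v (W : Type) : Type :=
| S2Orig of W
| S2Copy of W & nat
| S2Dart of W & W.

Section S2.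
Variables (W : finType) (e : rel W) (alpha : W -> nat).

Definition S2vert (z : s2v W) : Prop :=
  match z with
  | S2Orig v => ~ is_leaf e v
  | S2Copy v i => is_leaf e v /\ 1 <= i <= alpha v
  | S2Dart u v => e u v
  end.

(* one orientation of each edge type *)
Definition S2edge0 (z z' : s2v W) : Prop :=
  match z, z' with
  | S2Dart u v, S2Dart v' u' => e u v /\ u' = u /\ v' = v
  | S2Orig v, S2Dart v' w => ~ is_leaf e v /\ e v w /\ v' = v
  | S2Copy v i, S2Dart v' w =>
      is_leaf e v /\ 1 <= i <= alpha v /\ e v w /\ v' = v
  | _, _ => False
  end.

Definition S2adj (z z' : s2v W) : Prop := S2edge0 z z' \/ S2edge0 z' z.
End S2.

Definition spanning_supergraph (V : finType) (t : rel V) (U : Type)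
  (vert : U -> Prop) (adj : U -> U -> Prop) (f : V -> U) :=
  [/\ injective f, (forall z, vert z <-> exists a, f a = z) &
      (forall a b, adj (f a) (f b) -> t a b)].

(* Main.v *)
Require Import Defs.
From mathcomp Require Import all_boot.
From HB Require Import structures.
From mathcomp Require Import zify.
From Stdlib Require Import Classical.

Set Implicit Arguments. Unset Strict Implicit. Unset Printing Implicit Defensive.

Section Basics.
Variable V : finType.
Variable t : rel V.

Definition DP (P : {set V}) (m : V -> V) :=
  [/\ dominating t (~: P), dominating t P &
      (forall x, x \in P -> [/\ m x \in P, t x (m x) & m (m x) = x])].

Lemma DPDP_DP : simple_graph t -> DPDP t -> exists P m, DP P m.
Proof.
case=> tsym tirr [D [P [dis DP1 domD [domP [M [HM1 HM2]]]]]].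
have DE : D = ~: P.
  apply/setP=> x; rewrite inE; apply/idP/idP.
    by move=> xD; rewrite (disjointFr dis xD).
  move=> xP; have : x \in D :|: P by rewrite DP1 inE.
  by rewrite inE (negbTE xP) orbF.
pose m x := odflt x [pick y | (y \in P) && ([set x; y] \in M)].
exists P, m; split; first by rewrite -DE.
  by [].
move=> x xP.
have key : forall z, z \in P -> exists y, [/\ y \in P, t z y, [set z; y] \in M &
   forall y', [set z; y'] \in M -> y' = y].
  move=> z zP; have [b [[bM zb] Hb]] := HM2 z zP.
  have [a [c [aP cP ac bE]]] := HM1 b bM.
  have nac : a != c by apply/eqP=> E; move: ac; rewrite E tirr.
  have [za|zc] : z = a \/ z = c by move: zb; rewrite bE !inE => /orP[]/eqP->; [left|right].
  - subst z; exists c; split=> //; first by rewrite -bE.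
    move=> y' My'; have := Hb _ (conj My' (set21 _ _)); rewrite bE => E.
    have : c \in [set a; y'] by rewrite -E set22.
    rewrite !inE => /orP[/eqP ca|/eqP//].
    by move: nac; rewrite ca eqxx.
  - subst z; exists a; split=> //; first by rewrite tsym.
      by rewrite setUC -bE.
    move=> y' My'; have := Hb _ (conj My' (set21 _ _)); rewrite bE => E.
    have : a \in [set c; y'] by rewrite -E set21.
    rewrite !inE => /orP[/eqP ca|/eqP//].
    by move: nac; rewrite ca eqxx.
have mspec : forall z, z \in P -> [/\ m z \in P, t z (m z), [set z; m z] \in M &
   forall y', [set z; y'] \in M -> y' = m z].
  move=> z zP; have [y [yP zy yM Hy]] := key z zP.
  rewrite /m; case: pickP => [y'' /andP[y''P y''M]|/(_ y)]; last by rewrite yP yM.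
  by rewrite /= (Hy _ y''M); split.
have [mP xm xmM Hx] := mspec x xP; split=> //.
have [_ _ _ Hm] := mspec (m x) mP.
by symmetry; apply: Hm; rewrite setUC.
Qed.

Lemma DP_DPDP : simple_graph t -> forall P m, DP P m -> DPDP t.
Proof.
case=> tsym tirr P m [domD domP Hm].
exists (~: P), P; split.
- by rewrite -setI_eq0 setIC setICr.
- by apply/setP=> x; rewrite !inE orNb.
- by [].
split=> //; exists [set [set x; m x] | x in P]; split.
  move=> b /imsetP[x xP ->]; have [mP xm _] := Hm x xP.
  by exists x, (m x); split.
move=> x xP; exists [set x; m x]; split.
  by split; [apply: imset_f | rewrite set21].
move=> b [/imsetP[y yP ->]]; rewrite !inE => /orP[/eqP->//|/eqP->].
have [_ _ ->] := Hm y yP; by rewrite setUC.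
Qed.

End Basics.

Section S2eq.
Variable W : eqType.
Definition s2v_eqb (z z' : s2v W) : bool :=
  match z, z' with
  | S2Orig a, S2Orig b => a == b
  | S2Copy a i, S2Copy b j => (a == b) && (i == j)
  | S2Dart a b, S2Dart c d => (a == c) && (b == d)
  | _, _ => false
  end.
Lemma s2v_eqP : Equality.axiom s2v_eqb.
Proof.
case=> [a|a i|a b] [c|c j|c d] /=; try by constructor.
- by apply: (iffP eqP) => [->|[]].
- by apply: (iffP andP) => [[/eqP-> /eqP->]|[-> ->]].
- by apply: (iffP andP) => [[/eqP-> /eqP->]|[-> ->]].
Qed.
HB.instance Definition _ := hasDecEq.Build (s2v W) s2v_eqP.
End S2eq.

Definition is_dart (W : Type) (z : s2v W) := if z is S2Dart _ _ then true else false.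
Definition swap (W : Type) (z : s2v W) :=
  if z is S2Dart a b then S2Dart b a else z.

Lemma deg_gt0_ex (V : finType) (e : rel V) x : 0 < deg e x -> exists y, e x y.
Proof. by rewrite /deg card_gt0 => /set0Pn[y]; rewrite inE; exists y. Qed.

Lemma back (V W : finType) (t : rel V) (eF : rel W) alpha (f : V -> s2v W) :
  simple_graph t -> symmetric eF -> no_isolated eF ->
  (forall w, is_leaf eF w -> 0 < alpha w) ->
  spanning_supergraph t (S2vert eF alpha) (S2adj eF alpha) f ->
  exists m, DP t [set v | is_dart (f v)] m.
Proof.
case=> tsym tirr esym noiso alpha_pos [finj fsurj fadj].
have pre : forall z, S2vert eF alpha z -> exists a, f a = z by move=> z /fsurj.
have vf : forall a, S2vert eF alpha (f a) by move=> a; apply/fsurj; exists a.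
have adj0 : forall a b, S2edge0 eF alpha (f a) (f b) -> t a b.
  by move=> a b H; apply: fadj; left.
pose m v := odflt v [pick u | f u == swap (f v)].
exists m; split.
- move=> x; rewrite !inE negbK => xP.
  case Ex: (f x) xP => [a|a i|a b] //= _.
  have ab : eF a b by have := vf x; rewrite Ex.
  case: (deg eF a =P 1) => la.
  + have [u Eu] : exists u, f u = S2Copy a 1.
      by apply: pre => /=; split=> //; rewrite /= alpha_pos.
    exists u; first by rewrite !inE Eu.
    by rewrite tsym; apply: adj0; rewrite Eu Ex /= alpha_pos.
  + have [u Eu] : exists u, f u = S2Orig a by apply: pre.
    exists u; first by rewrite !inE Eu.
    by rewrite tsym; apply: adj0; rewrite Eu Ex /=.
- move=> x; rewrite !inE => xP.
  case Ex: (f x) xP => [a|a i|a b] //= _.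
  + have la : ~ is_leaf eF a by have := vf x; rewrite Ex.
    have [b ab] := deg_gt0_ex (noiso a).
    have [u Eu] : exists u, f u = S2Dart a b by apply: pre.
    by exists u; [rewrite inE Eu | apply: adj0; rewrite Ex Eu].
  + have [la ia] : is_leaf eF a /\ 1 <= i <= alpha a by have := vf x; rewrite Ex.
    have [b ab] : exists b, eF a b by apply: deg_gt0_ex; rewrite la.
    have [u Eu] : exists u, f u = S2Dart a b by apply: pre.
    by exists u; [rewrite inE Eu | apply: adj0; rewrite Ex Eu].
- move=> x; rewrite inE => xP.
  case Ex: (f x) xP => [a|a i|a b] //= _.
  have ab : eF a b by have := vf x; rewrite Ex.
  have [u Eu] : exists u, f u = S2Dart b a by apply: pre => /=; rewrite esym.
  have mx : m x = u.
    rewrite /m; case: pickP => [u' /eqP|/(_ u)]; last by rewrite Eu Ex eqxx.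
    by rewrite Ex /= -Eu => /finj.
  rewrite mx !inE Eu /=; split=> //.
    by apply: adj0; rewrite Ex Eu /=.
  rewrite /m; case: pickP => [u' /eqP|/(_ x)]; last by rewrite Eu Ex eqxx.
  by rewrite Eu /= -Ex => /finj.
Qed.

Lemma zip_arc (T : eqType) (x : T) p u w : uniq (x :: p) ->
  (u, w) \in zip (x :: p) p -> [/\ u \in x :: p, u != last x p & w \in p].
Proof.
elim: p x => [|y p IH] x //=.
rewrite in_cons => /andP[xn up] /orP[/eqP[-> ->]|H].
  split; rewrite ?in_cons ?eqxx //.
  by apply/eqP=> E; move: xn; rewrite E /= -in_cons mem_last.
have [H1 H2 H3] := IH y up H.
by split=> //; rewrite in_cons ?H1 ?H3 ?orbT.
Qed.

Lemma path_pred (T : eqType) (e : rel T) x p y :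
  path e x p -> y \in p -> exists z, e z y.
Proof.
elim: p x => [|z p IH] x //=.
move=> /andP[xz pz]; rewrite in_cons => /orP[/eqP->|yp]; first by exists x.
exact: IH pz yp.
Qed.

Lemma deg1_uniq (T : finType) (a : rel T) z y1 y2 :
  deg a z = 1 -> a z y1 -> a z y2 -> y1 = y2.
Proof.
rewrite /deg => /eqP/cards1P[x Ex] h1 h2.
have : y1 \in [set y | a z y] by rewrite inE.
have : y2 \in [set y | a z y] by rewrite inE.
by rewrite Ex !inE => /eqP-> /eqP->.
Qed.

Lemma cover3 (T : finType) (O I Q E : {set T}) :
  O \subset E -> I \subset E -> Q \subset E ->
  (forall y, y \in O -> y \in I -> False) ->
  (forall y, y \in O -> y \in Q -> False) ->
  (forall y, y \in I -> y \in Q -> False) ->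
  #|O| + #|I| + #|Q| = #|E| ->
  forall y, y \in E -> [|| y \in O, y \in I | y \in Q].
Proof.
move=> sO sI sQ dOI dOQ dIQ card y yE.
have e1 : O :&: I = set0.
  by apply/setP=> z; rewrite !inE; apply/negP=> /andP[h1 h2]; apply: (dOI z).
have e2 : (O :|: I) :&: Q = set0.
  apply/setP=> z; rewrite !inE; apply/negP=> /andP[/orP[h1|h1] h2];
  [exact: (dOQ z h1 h2) | exact: (dIQ z h1 h2)].
have cU : #|O :|: I :|: Q| = #|E| by rewrite cardsU e2 cards0 cardsU e1 cards0 !subn0.
have sU : O :|: I :|: Q \subset E by rewrite !subUset sO sI sQ.
by have := (subset_cardP cU sU) y; rewrite yE !inE -orbA => ->.
Qed.

Lemma deg_lt_ex (T : finType) (e a : rel T) z :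
  (forall y, a y z -> e z y) -> indeg a z < deg e z -> exists y, e z y && ~~ a y z.
Proof.
move=> sub lt.
have : ~~ ([set y | e z y] \subset [set y | a y z]).
  apply/negP=> /subset_leq_card; rewrite -/(deg e z) -/(indeg a z); lia.
by case/subsetPn=> y; rewrite !inE => h1 h2; exists y; rewrite h1.
Qed.

Section Reduce.
Variables (V W : finType) (t : rel V) (eF : rel W) (alpha : W -> nat) (f : V -> s2v W).
Variable q : rel W.
Hypothesis tS : simple_graph t.
Hypothesis eS : simple_graph eF.
Hypothesis alpha_pos : forall w, is_leaf eF w -> 0 < alpha w.
Hypothesis noiso : no_isolated eF.
Hypothesis span : spanning_supergraph t (S2vert eF alpha) (S2adj eF alpha) f.
Hypothesis good : good_subgraph eF q.

Lemma reduce : exists P' m', DP t P' m' /\ #|P'| < #|[set v | is_dart (f v)]|.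
Proof.
have [tsym tirr] := tS; have [esym eirr] := eS.
have [finj fsurj fadj] := span.
have pre : forall z, S2vert eF alpha z -> exists a, f a = z by move=> z /fsurj.
have vf : forall a, S2vert eF alpha (f a) by move=> a; apply/fsurj; exists a.
have adj0 : forall a b, S2edge0 eF alpha (f a) (f b) -> t a b.
  by move=> a b H; apply: fadj; left.
case: good => qe qsym [x0 [y0 q0]] [a [Pth [[ae aanti] cov paths arcs [Hi Hii Hiii]]]].
pose inner w := [exists x, [&& vQ q x, w \in Pth x & w != last x (Pth x)]].
pose Mv w := vQ q w || inner w.
have qE : forall x y, q x y -> eF x y by [].
have aE : forall x y, a x y -> eF x y by move=> x y /ae/andP[].
have aQ : forall x y, a x y -> ~~ q x y by move=> x y /ae/andP[].
have vQP : forall x y, q x y -> vQ q x by move=> x y h; apply/existsP; exists y.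
have nvQ : forall x y, ~~ vQ q x -> ~~ q x y.
  by move=> x y; apply: contra => /vQP.
have L_arc : forall u w, a u w -> exists x,
    [/\ vQ q x, u \in x :: Pth x, u != last x (Pth x) & w \in Pth x].
  move=> u w auw; have := arcs u w auw => /eqP/cards1P[x Ex].
  have : x \in [set x | vQ q x && ((u, w) \in arcs_of x (Pth x))] by rewrite Ex set11.
  rewrite inE => /andP[vx H]; have [_ _ ux] := paths x vx.
  by have [h1 h2 h3] := zip_arc ux H; exists x.
have L_out : forall u w, a u w -> Mv u.
  move=> u w /L_arc[x [vx]]; rewrite in_cons => /orP[/eqP->|up] ul _.
    by rewrite /Mv vx.
  by rewrite /Mv; apply/orP; right; apply/existsP; exists x; rewrite vx up ul.
have L_pred : forall x y, vQ q x -> y \in Pth x -> exists z, a z y.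
  move=> x y vx yp; have [_ px _] := paths x vx; exact: path_pred px yp.
have L_deg : forall u, Mv u -> deg a u = 1.
  move=> u /orP[/Hi[]//|/existsP[x /and3P[vx up ul]]].
  by have [] := Hii x u vx up ul.
have L_cover : forall u y, Mv u -> eF u y -> [|| a u y, a y u | q u y].
  move=> u y Mu uy.
  have sO : [set z | a u z] \subset [set z | eF u z].
    by apply/subsetP=> z; rewrite !inE => /aE.
  have sI : [set z | a z u] \subset [set z | eF u z].
    by apply/subsetP=> z; rewrite !inE => /aE; rewrite esym.
  have dOI : forall z, z \in [set z | a u z] -> z \in [set z | a z u] -> False.
    by move=> z; rewrite !inE => /aanti/negbTE->.
  case/orP: Mu => [vu | /existsP[x /and3P[vx up ul]]].
    have [_ Hd] := Hi u vu.
    have := @cover3 _ [set z | a u z] [set z | a z u] [set z | q u z] [set z | eF u z]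
      sO sI _ dOI _ _ _ y.
    rewrite !inE; apply=> //.
    - by apply/subsetP=> z; rewrite !inE => /qE.
    - by move=> z; rewrite !inE => /aQ/negbTE->.
    - by move=> z; rewrite !inE qsym => /aQ/negbTE->.
    - by rewrite -/(deg a u) -/(indeg a u) -/(deg q u) -/(deg eF u) (L_deg u) ?/Mv ?vu // -Hd; lia.
  have [Hd1 Hd] := Hii x u vx up ul.
  suff : [|| a u y, a y u | false] by rewrite orbF => /orP[]->; rewrite ?orbT.
  have := @cover3 _ [set z | a u z] [set z | a z u] set0 [set z | eF u z]
      sO sI (sub0set _) dOI _ _ _ y.
  rewrite !inE; apply=> //.
  - by move=> z _; rewrite inE.
  - by move=> z _; rewrite inE.
  - by rewrite cards0 -/(deg a u) -/(indeg a u) -/(deg eF u) Hd1 -Hd; lia.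
have L_nonleaf : forall u, Mv u -> ~ is_leaf eF u.
  move=> u Mu; rewrite /is_leaf.
  case/orP: (Mu) => [vu | /existsP[x /and3P[vx up ul]]].
    have [_ Hd] := Hi u vu.
    have : 0 < deg q u.
      by case/existsP: vu => y quy; rewrite /deg card_gt0; apply/set0Pn; exists y; rewrite inE.
    lia.
  have [Hd1 Hd] := Hii x u vx up ul.
  have [z azu] := L_pred x u vx up.
  have : 0 < indeg a u by rewrite /indeg card_gt0; apply/set0Pn; exists z; rewrite inE.
  lia.
have L_end : forall z, ~~ Mv z -> exists y, eF z y && ~~ a y z.
  move=> z Mz.
  case: (pickP (fun y => a y z)) => [y ayz|none].
    have [x [vx _ _ zp]] := L_arc y z ayz.
    have zl : z = last x (Pth x).
      apply/eqP; apply: contraNT Mz => zl.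
      by rewrite /Mv; apply/orP; right; apply/existsP; exists x; rewrite vx zp zl.
    apply: deg_lt_ex; first by move=> y' /aE; rewrite esym.
    by rewrite zl; apply: Hiii.
  have [y zy] := deg_gt0_ex (noiso z).
  by exists y; rewrite zy none.
have L_leaf : forall v w, is_leaf eF v -> eF v w -> ~~ a w v && ~~ q v w.
  move=> v w lv vw; apply/andP; split.
    apply/negP=> awv; have [x [vx _ _ vp]] := L_arc w v awv.
    case: (boolP (v == last x (Pth x))) => [/eqP vl|vl].
      have := Hiii x vx; rewrite -vl lv.
      rewrite ltnS leqn0 /indeg cards_eq0 => /eqP/setP/(_ w); rewrite !inE awv.
      by [].
    apply: (L_nonleaf v) lv.
    by rewrite /Mv; apply/orP; right; apply/existsP; exists x; rewrite vx vp vl.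
  apply/negP=> qvw; apply: (L_nonleaf v) lv.
  by rewrite /Mv (vQP _ _ qvw).
pose inP' v := match f v with S2Orig w => Mv w | S2Copy _ _ => false
                 | S2Dart u w => ~~ a w u && ~~ q u w end.
pose P' := [set v | inP' v].
pose newpair v u := match f v, f u with
   | S2Dart x y, S2Orig z => a x y && (z == x)
   | S2Orig z, S2Dart x y => a x y && (z == x)
   | S2Dart x y, S2Dart x' y' => [&& x' == y, y' == x, ~~ a x y, ~~ a y x & ~~ q x y]
   | _, _ => false end.
pose m' v := odflt v [pick u | newpair v u].
have vD : forall v x y, f v = S2Dart x y -> eF x y by move=> v x y E; have := vf v; rewrite E.
have vO : forall v w, f v = S2Orig w -> ~ is_leaf eF w by move=> v w E; have := vf v; rewrite E.
have vC : forall v w i, f v = S2Copy w i -> is_leaf eF w /\ 1 <= i <= alpha w.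
  by move=> v w i E; have := vf v; rewrite E.
have NP_ex : forall v, v \in P' -> exists u, newpair v u.
  move=> v; rewrite inE /inP' /newpair; case Ev: (f v) => [w|w i|x y] //.
  - move=> Mw; have [y awy] := deg_gt0_ex (eq_ind_r (fun n => 0 < n) (ltnSn 0) (L_deg w Mw)).
    have [u Eu] : exists u, f u = S2Dart w y by apply: pre; exact: aE.
    by exists u; rewrite Eu awy eqxx.
  - case/andP=> nayx nqxy; case axy: (a x y).
      have [u Eu] : exists u, f u = S2Orig x by apply: pre; apply: L_nonleaf; apply: L_out axy.
      by exists u; rewrite Eu eqxx.
    have [u Eu] : exists u, f u = S2Dart y x by apply: pre => /=; rewrite esym; apply: vD Ev.
    by exists u; rewrite Eu !eqxx nayx nqxy.
have NP_sym : forall v u, newpair v u -> newpair u v.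
  move=> v u; rewrite /newpair; case: (f v) => [w|w i|x y]; case: (f u) => [w'|w' i'|x' y'] //=.
  by case/and5P=> /eqP-> /eqP-> h1 h2 h3; rewrite !eqxx h1 h2 qsym h3.
have NP_uniq : forall v u1 u2, newpair v u1 -> newpair v u2 -> u1 = u2.
  move=> v u1 u2; rewrite /newpair; case Ev: (f v) => [w|w i|x y];
    case E1: (f u1) => [w1|w1 i1|x1 y1]; case E2: (f u2) => [w2|w2 i2|x2 y2] //=.
  - case/andP=> a1 /eqP e1; case/andP=> a2 /eqP e2; subst x1 x2.
    have Mw : Mv w by apply: L_out a1.
    have := deg1_uniq (L_deg w Mw) a1 a2 => ey; subst y2.
    by apply: finj; rewrite E1 E2.
  - by case/andP=> _ /eqP e1; case/andP=> _ /eqP e2; apply: finj; rewrite E1 E2 e1 e2.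
  - by case/andP=> -> _; case/and5P=> _ _ /negP.
  - by case/and5P=> _ _ /negP nb _ _ /andP[/nb].
  - case/and5P=> /eqP ? /eqP ? _ _ _; case/and5P=> /eqP ? /eqP ? _ _ _; subst.
    by apply: finj; rewrite E1 E2.
have NP_in : forall v u, v \in P' -> newpair v u -> u \in P'.
  move=> v u; rewrite !inE /inP' /newpair; case: (f v) => [w|w i|x y];
    case: (f u) => [w'|w' i'|x' y'] //=.
  - by move=> _ /andP[awy _]; rewrite (aanti _ _ awy) (aQ _ _ awy).
  - by move=> _ /andP[axy /eqP->]; apply: L_out axy.
  - by move=> _ /and5P[/eqP-> /eqP-> h1 h2 h3]; rewrite h1 qsym h3.
have NP_adj : forall v u, newpair v u -> t v u.
  move=> v u; rewrite /newpair; case Ev: (f v) => [w|w i|x y];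
    case Eu: (f u) => [w'|w' i'|x' y'] //=.
  - case/andP=> awy /eqP ?; subst w; apply: adj0; rewrite Ev Eu /=.
    by split; [apply: L_nonleaf; apply: L_out awy | split; [apply: aE|]].
  - case/andP=> axy /eqP ?; subst w'; rewrite tsym; apply: adj0; rewrite Ev Eu /=.
    by split; [apply: L_nonleaf; apply: L_out axy | split; [apply: aE|]].
  - case/and5P=> /eqP ? /eqP ? _ _ _; subst x' y'; apply: adj0; rewrite Ev Eu /=.
    by split; [apply: vD Ev|].
have m'spec : forall v, v \in P' -> newpair v (m' v).
  move=> v vP; rewrite /m'; case: pickP => [u //|none].
  by have [u] := NP_ex v vP; rewrite none.
pose P0 := [set v | is_dart (f v)].
exists P', m'; split.
  split.
  - move=> x; rewrite !inE negbK /inP'; case Ex: (f x) => [w|w i|u w] //.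
    + move=> Mw; case/orP: (Mw) => [/existsP[y qwy]|/existsP[x' /and3P[vx wp wl]]].
        have [u Eu] : exists u, f u = S2Dart w y by apply: pre; apply: qE.
        exists u; first by rewrite !inE /inP' Eu qwy andbF.
        apply: adj0; rewrite Ex Eu /=; split; first exact: L_nonleaf.
        by split; [apply: qE|].
      have [z azw] := L_pred x' w vx wp.
      have [u Eu] : exists u, f u = S2Dart w z by apply: pre => /=; rewrite esym; apply: aE.
      exists u; first by rewrite !inE /inP' Eu azw.
      apply: adj0; rewrite Ex Eu /=; split; first exact: L_nonleaf.
      by split; [rewrite esym; apply: aE|].
    + case/andP=> nawu nquw.
      case: (boolP (Mv u)) => Mu.
        have := L_cover u w Mu (vD _ _ _ Ex); rewrite (negbTE nawu) (negbTE nquw) !orbF /= => auw.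
        have [u' Eu'] : exists u', f u' = S2Dart w u by apply: pre => /=; rewrite esym; apply: aE.
        exists u'; first by rewrite !inE /inP' Eu' auw.
        by apply: adj0; rewrite Ex Eu' /=; split; [apply: vD Ex|].
      case: (deg eF u =P 1) => lu.
        have [u' Eu'] : exists u', f u' = S2Copy u 1 by apply: pre => /=; rewrite alpha_pos.
        exists u'; first by rewrite !inE /inP' Eu'.
        rewrite tsym; apply: adj0; rewrite Ex Eu' /=. by rewrite alpha_pos //; split=> //; split=> //; split; [apply: vD Ex|].
      have [u' Eu'] : exists u', f u' = S2Orig u by apply: pre.
      exists u'; first by rewrite !inE /inP' Eu'.
      by rewrite tsym; apply: adj0; rewrite Ex Eu' /=; split=> //; split=> //; apply: vD Ex.
  - move=> x; rewrite !inE /inP'; case Ex: (f x) => [w|w i|u w].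
    + move=> Mw; have [y /andP[wy nayw]] := L_end w Mw.
      have [u Eu] : exists u, f u = S2Dart w y by apply: pre.
      exists u.
        rewrite !inE /inP' Eu nayw /=; apply: nvQ.
        by apply: contra Mw => vw; rewrite /Mv vw.
      by apply: adj0; rewrite Ex Eu /=; split; [apply: vO Ex|].
    + move=> _; have [lw iw] := vC _ _ _ Ex.
      have [y wy] : exists y, eF w y by apply: deg_gt0_ex; rewrite lw.
      have [u Eu] : exists u, f u = S2Dart w y by apply: pre.
      exists u; first by rewrite !inE /inP' Eu; apply: L_leaf.
      by apply: adj0; rewrite Ex Eu /=.
    + rewrite negb_and !negbK => /orP[awu|quw].
        have [u' Eu'] : exists u', f u' = S2Dart w u by apply: pre => /=; apply: aE.
        exists u'; first by rewrite !inE /inP' Eu' (aanti _ _ awu) (aQ _ _ awu).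
        by apply: adj0; rewrite Ex Eu' /=; split; [apply: vD Ex|].
      have Mu : Mv u by rewrite /Mv (vQP _ _ quw).
      have [u' Eu'] : exists u', f u' = S2Orig u by apply: pre; apply: L_nonleaf.
      exists u'; first by rewrite !inE /inP' Eu'.
      by rewrite tsym; apply: adj0; rewrite Ex Eu' /=; split; [apply: L_nonleaf | split; [apply: vD Ex|]].
  - move=> x xP; have h := m'spec x xP; have mP := NP_in _ _ xP h.
    split=> //; first exact: NP_adj.
    by apply: NP_uniq (m'spec _ mP) (NP_sym _ _ h).
pose N := P' :\: P0.
pose L := P0 :\: P'.
pose hrel v u := match f v, f u with
  | S2Orig w, S2Dart y w' => (w' == w) && a w y | _, _ => false end.
pose h v := odflt v [pick u | hrel v u].
have Nspec : forall v, v \in N -> exists2 w, f v = S2Orig w & Mv w.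
  move=> v; rewrite !inE /inP'; case: (f v) => [w|w i|x y] //=.
  by move=> Mw; exists w.
have hN : forall v, v \in N -> hrel v (h v).
  move=> v vN; have [w Ev Mw] := Nspec v vN.
  rewrite /h; case: pickP => [u //|none].
  have [y awy] := deg_gt0_ex (eq_ind_r (fun n => 0 < n) (ltnSn 0) (L_deg w Mw)).
  have [u Eu] : exists u, f u = S2Dart y w by apply: pre => /=; rewrite esym; apply: aE.
  by have := none u; rewrite /hrel Ev Eu eqxx awy.
have h_inj : {in N &, injective h}.
  move=> v1 v2 v1N v2N E.
  have := hN v1 v1N; have := hN v2 v2N; rewrite -E /hrel.
  have [w1 E1 _] := Nspec v1 v1N; have [w2 E2 _] := Nspec v2 v2N.
  rewrite E1 E2; case: (f (h v1)) => [||y w'] //= /andP[/eqP e2 _] /andP[/eqP e1 _].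
  by apply: finj; rewrite E1 E2 -e1 -e2.
have hL : forall v, v \in N -> h v \in L.
  move=> v vN; have := hN v vN; rewrite /hrel; have [w Ev _] := Nspec v vN.
  rewrite Ev !inE /inP'; case: (f (h v)) => [||y w'] //= /andP[/eqP -> awy].
  by rewrite awy.
have [u0 Eu0] : exists u, f u = S2Dart x0 y0 by apply: pre; apply: qE.
have u0L : u0 \in L by rewrite !inE /inP' Eu0 q0 andbF.
have u0h : u0 \notin [set h v | v in N].
  apply/imsetP=> [[v vN E]]; have := hN v vN; rewrite -E /hrel Eu0.
  have [w Ev _] := Nspec v vN; rewrite Ev => /andP[/eqP ? ay0x0]; subst w.
  by move: (aQ _ _ ay0x0); rewrite qsym q0.
have NL : #|N| < #|L|.
  rewrite -(card_in_imset h_inj); apply: proper_card; apply/properP; split.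
    by apply/subsetP=> u /imsetP[v vN ->]; apply: hL.
  by exists u0.
have c1 := cardsID P0 P'; have c2 := cardsID P' P0.
rewrite setIC in c2; rewrite -/N -/L in c1 c2 NL.
rewrite -/P0; lia.
Qed.
End Reduce.

Section Owner.
Variables (V : finType) (t : rel V) (P : {set V}) (m : V -> V).
Hypothesis tsym : symmetric t.
Hypothesis domD : dominating t (~: P).

Definition validg (g : V -> V) := forall x, x \in P -> g x \notin P /\ t x (g x).
Definition Maxb (g : V -> V) := [forall d, forall y,
  [&& d \notin P, d \notin g @: P, y \in P & t d y] ==> (#|[set x in P | g x == g y]| == 1)].

Lemma exists_g : exists g, validg g /\ Maxb g.
Proof.
pose S g := ~: P :\: g @: P.
have step : forall g, validg g -> ~~ Maxb g -> exists g', validg g' /\ #|S g'| < #|S g|.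
  move=> g vg /forallPn[d /forallPn[y]]; rewrite negb_imply => /andP[/and4P[dP dg yP dy] c1].
  have yS : y \in [set x in P | g x == g y] by rewrite inE yP eqxx.
  have [x' x'S x'y] : exists2 x', x' \in [set x in P | g x == g y] & x' != y.
    apply/exists_inP; rewrite -negb_forall_in; apply: contra c1 => /forall_inP H.
    apply/cards1P; exists y; apply/setP=> z; rewrite [in RHS]inE.
    apply/idP/idP => [zS|/eqP->//]; exact: H z zS.
  move: x'S; rewrite inE => /andP[x'P /eqP gx'].
  pose g' x := if x == y then d else g x.
  exists g'; split.
    move=> x xP; rewrite /g'; case: eqP => [->|_]; last exact: vg.
    by rewrite tsym.
  apply: proper_card; apply/properP; split.
    apply/subsetP=> z; rewrite !inE => /andP[zg' zP]; rewrite zP andbT.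
    apply: contra zg' => /imsetP[x xP ->]; apply/imsetP.
    case: (eqVneq x y) => [exy|nxy].
      by exists x'; rewrite // /g' (negbTE x'y) gx' exy.
    by exists x; rewrite // /g' (negbTE nxy).
  exists d; first by rewrite !inE dg.
  by rewrite !inE negb_and negbK; apply/orP; left; apply/imsetP; exists y; rewrite // /g' eqxx.
pose g0 x := odflt x [pick d | (d \notin P) && t x d].
have vg0 : validg g0.
  move=> x xP; rewrite /g0; case: pickP => [d /andP[]//|none].
  have [d dP xd] : exists2 d, d \in ~: P & t x d by apply: domD; rewrite inE negbK.
  by have := none d; rewrite -(negbK (d \notin P)) -in_setC dP xd.
suff : forall n g, validg g -> #|S g| <= n -> exists g', validg g' /\ Maxb g'.
  by move/(_ _ g0 vg0 (leqnn _)).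
elim=> [|n IH] g vg cn; case Mg: (Maxb g); try by exists g.
  have [g' [vg' lt]] := step g vg (negbT Mg); lia.
have [g' [vg' lt]] := step g vg (negbT Mg); apply: (IH g') => //; lia.
Qed.
End Owner.

Section Lift.
Variables (V : finType) (t : rel V) (P : {set V}) (m g : V -> V).
Hypothesis tsym : symmetric t.
Hypothesis tacyc : acyclic t.
Hypothesis mP : forall x, x \in P -> [/\ m x \in P, t x (m x) & m (m x) = x].
Hypothesis gP : forall x, x \in P -> g x \notin P /\ t x (g x).

Definition eV a b := [exists x in P, (g x == a) && (g (m x) == b)].

Lemma lift_cycle s : uniq s -> 2 < size s -> cycle eV s -> False.
Proof.
case: s => [//|v0 s'] us ks cs; set s := v0 :: s' in us ks cs.
pose k := size s.
pose nx i := if i.+1 < k then i.+1 else 0.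
have nxk : forall i, nx i < k by move=> i; rewrite /nx; case: ifP => //; rewrite /k /s /=.
have E : forall i, i < k -> eV (nth v0 s i) (nth v0 s (nx i)).
  move=> i ik; move: cs; rewrite (cycle_path v0) => /(pathP v0) H.
  rewrite /nx; case: ifP => ik1.
    by have := H i.+1 ik1.
  have -> : i = k.-1 by lia.
  by have := H 0 (ltn0Sn _); rewrite /= nth_last.
pose dx i := odflt v0 [pick x | (x \in P) && (g x == nth v0 s i) && (g (m x) == nth v0 s (nx i))].
have dxS : forall i, i < k -> [/\ dx i \in P, g (dx i) = nth v0 s i & g (m (dx i)) = nth v0 s (nx i)].
  move=> i ik; rewrite /dx; case: pickP => [x /andP[/andP[xP /eqP h1] /eqP h2]|none] //.
  by have := E i ik => /exists_inP[x xP /andP[h1 h2]]; have := none x; rewrite xP h1 h2.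
have sP : forall i, i < k -> nth v0 s i \notin P.
  by move=> i ik; have [xP <- _] := dxS i ik; have [] := gP xP.
pose blk i r := if r == 0 then nth v0 s i else if r == 1 then dx i else m (dx i).
pose c := mkseq (fun j => blk (j %/ 3) (j %% 3)) (3 * k).
have cE : forall i r, i < k -> r < 3 -> nth v0 c (i * 3 + r) = blk i r.
  move=> i r ik r3; rewrite nth_mkseq; last by lia.
  have -> : (i * 3 + r) %/ 3 = i by lia.
  by have -> : (i * 3 + r) %% 3 = r by lia.
have dec : forall j, j < 3 * k -> exists i r, [/\ j = i * 3 + r, i < k & r < 3].
  by move=> j jk; exists (j %/ 3), (j %% 3); split; lia.
have sc : size c = 3 * k by rewrite size_mkseq.
have sinj : forall i1 i2, i1 < k -> i2 < k -> nth v0 s i1 = nth v0 s i2 -> i1 = i2.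
  by move=> i1 i2 h1 h2 /eqP; rewrite nth_uniq // => /eqP.
have dinj : forall i1 i2, i1 < k -> i2 < k -> dx i1 = dx i2 -> i1 = i2.
  move=> i1 i2 h1 h2 e; apply: sinj => //.
  by have [_ <- _] := dxS _ h1; have [_ <- _] := dxS _ h2; rewrite e.
have cross : forall i1 i2, i1 < k -> i2 < k -> dx i1 = m (dx i2) -> False.
  move=> i1 i2 h1 h2 e.
  have [d1P g1 gm1] := dxS _ h1; have [d2P g2 gm2] := dxS _ h2.
  have [_ _ mm] := mP d2P.
  have e1 : i1 = nx i2 by apply: sinj => //; rewrite -g1 -gm2 e.
  have e2 : nx i1 = i2 by apply: sinj => //; rewrite -gm1 -g2 e mm.
  move: e1 e2; rewrite /nx; case: ifP; case: ifP; rewrite /k /s /= in ks *; lia.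
have H1 : 2 < size c by rewrite sc; lia.
have H2 : uniq c.
  apply/(uniqP v0) => j1 j2; rewrite !inE sc => /dec[i1 [r1 [-> ik1 rk1]]] /dec[i2 [r2 [-> ik2 rk2]]].
  rewrite !cE // /blk.
  have [d1P _ _] := dxS _ ik1; have [d2P _ _] := dxS _ ik2.
  have [m1P _ mm1] := mP d1P; have [m2P _ mm2] := mP d2P.
  have n1 := sP _ ik1; have n2 := sP _ ik2.
  have r1E : r1 = 0 \/ r1 = 1 \/ r1 = 2 by lia.
  have r2E : r2 = 0 \/ r2 = 1 \/ r2 = 2 by lia.
  case: r1E => [->|[->|->]]; case: r2E => [->|[->|->]] /= e.
  - by rewrite (sinj _ _ ik1 ik2 e).
  - by move: n1; rewrite e d2P.
  - by move: n1; rewrite e m2P.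
  - by move: n2; rewrite -e d1P.
  - by rewrite (dinj _ _ ik1 ik2 e).
  - by case: (cross _ _ ik1 ik2 e).
  - by move: n2; rewrite -e m1P.
  - by case: (cross _ _ ik2 ik1 (esym e)).
  - by rewrite (dinj _ _ ik1 ik2); last by rewrite -mm1 -mm2 e.
suff H3 : cycle t c by move: (tacyc H1 H2); rewrite H3.
rewrite (cycle_path v0); apply/(pathP v0) => j; rewrite sc => jk.
case: j jk => [|j] jk.
  rewrite (_ : nth v0 (last v0 c :: c) 0 = last v0 c) // -nth_last sc.
  have -> : (3 * k).-1 = (k.-1) * 3 + 2 by rewrite /k /s /= in ks *; lia.
  rewrite cE; try by rewrite /k /s /= in ks *; lia.
  have -> : 0 = 0 * 3 + 0 by [].
  rewrite cE; try by rewrite /k /s /= in ks *; lia.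
  rewrite /blk /=.
  have k0 : k.-1 < k by rewrite /k /s /=.
  have [dP _ gm] := dxS _ k0; have [mxP _ _] := mP dP; have [_ tg] := gP mxP.
  move: tg; rewrite gm /nx; case: ifP => //; rewrite /k /s /= in ks *; lia.
rewrite (_ : nth v0 (last v0 c :: c) j.+1 = nth v0 c j) //.
have [i [r [jE ik rk]]] := dec j (ltnW jk).
have r2E : r = 0 \/ r = 1 \/ r = 2 by lia.
have [dP g1 gm] := dxS _ ik; have [mxP tm _] := mP dP.
case: r2E => [r0|[r1|r2]]; subst r.
- rewrite jE cE // (_ : (i * 3 + 0).+1 = i * 3 + 1); last by lia.
  rewrite cE // /blk /= -g1 tsym; by have [] := gP dP.
- rewrite jE cE // (_ : (i * 3 + 1).+1 = i * 3 + 2); last by lia.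
  by rewrite cE // /blk /=.
- have ik1 : i.+1 < k by move: jk; rewrite jE; lia.
  rewrite jE cE // (_ : (i * 3 + 2).+1 = i.+1 * 3 + 0); last by lia.
  rewrite cE // /blk /=.
  have [_ tg] := gP mxP; move: tg; rewrite gm /nx ik1 //.
Qed.
End Lift.

Section Construct.
Variables (V : finType) (t : rel V) (P : {set V}) (m : V -> V).
Hypothesis Htree : is_tree t.
Hypothesis HDP : DP t P m.

Lemma construct : exists (W : finType) (eF : rel W) (alpha : W -> nat) (f : V -> s2v W),
  [/\ is_forest eF, no_isolated eF, (forall w, is_leaf eF w -> 0 < alpha w),
      spanning_supergraph t (S2vert eF alpha) (S2adj eF alpha) f &
      #|[set v | is_dart (f v)]| = #|P|].
Proof.
case: Htree => [[tsym tirr] [V0 [_ tacyc]]].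
case: HDP => domD domP mS.
have [g [vg Mg]] := exists_g tsym domD.
have Max : forall d y, d \notin P -> d \notin g @: P -> y \in P -> t d y ->
    #|[set x in P | g x == g y]| = 1.
  move=> d y h1 h2 h3 h4; move/forallP: Mg => /(_ d)/forallP/(_ y).
  by rewrite h1 h2 h3 h4 /= => /eqP.
have nPP : forall a b, a \in P -> b \notin P -> (a == b) = false.
  by move=> a b aP bP; apply/eqP=> E; move: bP; rewrite -E aP.
have nPP' : forall a b, a \in P -> b \notin P -> (b == a) = false.
  by move=> a b aP bP; rewrite eq_sym nPP.
have tne : forall a b, t a b -> (a == b) = false.
  by move=> a b ab; apply/eqP=> E; move: ab; rewrite E tirr.
have G2 : forall x, x \in P -> (g (m x) == g x) = false.
  move=> x xP; apply/eqP=> E.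
  have [mP xm mm] := mS x xP; have [gxP xg] := vg x xP; have [_ mg] := vg _ mP.
  have : uniq [:: x; m x; g x].
    by rewrite /= !inE (tne _ _ xm) (nPP _ _ xP gxP) (nPP _ _ mP gxP).
  move/(tacyc [:: x; m x; g x] (erefl _)).
  by rewrite /= xm -E mg tsym E xg.
have G3 : forall x1 x2, x1 \in P -> x2 \in P -> g x1 = g x2 -> g (m x1) = g (m x2) -> x1 = x2.
  move=> x1 x2 x1P x2P e1 e2; apply/eqP; apply/negPn/negP=> n12.
  have [m1P t1 mm1] := mS x1 x1P; have [m2P t2 mm2] := mS x2 x2P.
  have [g1P tg1] := vg x1 x1P; have [gm1P tgm1] := vg _ m1P.
  have [_ tg2] := vg x2 x2P; have [_ tgm2] := vg _ m2P.
  have uw := G2 x1 x1P.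
  have a1 : (x1 == m x2) = false.
    by apply/eqP=> E; move: (G2 x2 x2P); rewrite -E e1 eqxx.
  have a2 : (m x1 == m x2) = false.
    by apply/eqP=> E; move/negP: n12; apply; rewrite -mm1 E mm2.
  have a3 : (m x1 == x2) = false.
    by apply/eqP=> E; move: uw; rewrite E -e1 eqxx.
  have : uniq [:: g x1; x1; m x1; g (m x1); m x2; x2].
    rewrite /= !inE (nPP' _ _ x1P g1P) (nPP' _ _ m1P g1P) (eq_sym (g x1)) uw.
    rewrite (nPP' _ _ m2P g1P) (nPP' _ _ x2P g1P) (tne _ _ t1) (nPP _ _ x1P gm1P) a1.
    rewrite (negbTE n12) (nPP _ _ m1P gm1P) a2 a3 (nPP' _ _ m2P gm1P) (nPP' _ _ x2P gm1P).
    by rewrite (tne (m x2) x2) // tsym.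
  move/(tacyc [:: g x1; x1; m x1; g (m x1); m x2; x2] (erefl _)).
  by rewrite /= -(tsym x1) tg1 t1 tgm1 e2 -(tsym (m x2)) tgm2 -(tsym x2) t2 e1 tg2.
pose inImg d := [exists x in P, g x == d].
pose cnt d := #|[set x in P | g x == d]|.
pose big d := 1 < cnt d.
pose cp d := if inImg d then d else g (odflt d [pick y | (y \in P) && t d y]).
pose cset w := [set d | (d \notin P) && ~~ big d && (cp d == w)].
have imgg : forall x, x \in P -> inImg (g x) by move=> x xP; apply/exists_inP; exists x.
have [x0 x0P] : exists x, x \in P.
  case/card_gt0P: V0 => v _.
  case: (boolP (v \in P)) => vP; first by exists v.
  by have [y yP _] := domP v vP; exists y.
pose W := {d : V | inImg d}.
pose w0 : W := exist _ (g x0) (imgg x0 x0P).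
pose toW v : W := insubd w0 v.
have toWK : forall v, inImg v -> val (toW v) = v by move=> v hv; apply: insubdK.
have valW : forall w : W, inImg (val w) by move=> w; apply: valP.
have toWv : forall w : W, toW (val w) = w by move=> w; apply: valKd.
have toW_inj : forall v1 v2, inImg v1 -> inImg v2 -> toW v1 = toW v2 -> v1 = v2.
  by move=> v1 v2 h1 h2 E; rewrite -(toWK _ h1) -(toWK _ h2) E.
pose eF : rel W := fun w1 w2 => [exists x in P, (g x == val w1) && (g (m x) == val w2)].
pose alpha (w : W) := #|cset (val w)|.
pose f v := if v \in P then S2Dart (toW (g v)) (toW (g (m v)))
            else if big v then S2Orig (toW v)
            else S2Copy (toW (cp v)) (index v (enum (cset (cp v)))).+1.
have imgP : forall d, inImg d -> exists2 x, x \in P & g x = d.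
  by move=> d /exists_inP[x xP /eqP]; exists x.
have imgNP : forall d, inImg d -> d \notin P.
  by move=> d /imgP[x xP <-]; have [] := vg x xP.
have cnt_gt0 : forall d, inImg d -> 0 < cnt d.
  move=> d /imgP[x xP gx]; rewrite /cnt card_gt0; apply/set0Pn; exists x.
  by rewrite inE xP gx eqxx.
have cnt_img : forall d, 0 < cnt d -> inImg d.
  move=> d; rewrite /cnt card_gt0 => /set0Pn[x]; rewrite inE => /andP[xP gx].
  by apply/exists_inP; exists x.
have degE : forall w, deg eF w = cnt (val w).
  move=> w; rewrite /deg /cnt.
  have -> : [set y | eF w y] = [set toW (g (m x)) | x in [set x in P | g x == val w]].
    apply/setP=> y; rewrite inE; apply/idP/idP.
      case/exists_inP=> x xP /andP[/eqP gx /eqP gmx]; apply/imsetP; exists x.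
        by rewrite inE xP gx eqxx.
      by rewrite gmx toWv.
    case/imsetP=> x; rewrite inE => /andP[xP /eqP gx] ->; apply/exists_inP; exists x => //.
    have [mP _ _] := mS x xP.
    by rewrite gx eqxx toWK ?eqxx //; apply: (imgg).
  rewrite card_in_imset //.
  move=> x1 x2; rewrite !inE => /andP[x1P /eqP g1] /andP[x2P /eqP g2] E.
  have [m1P _ _] := mS x1 x1P; have [m2P _ _] := mS x2 x2P.
  apply: G3 => //; first by rewrite g1 g2.
  by apply: toW_inj => //; apply: (imgg).
have leafE : forall w, is_leaf eF w <-> ~~ big (val w).
  move=> w; rewrite /is_leaf degE /big; have := cnt_gt0 _ (valW w).
  move=> h; split => [->//|]; rewrite -leqNgt => h2; apply/eqP; by rewrite eqn_leq h2 h.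
have cpS : forall d, d \notin P -> ~~ big d ->
    [/\ inImg (cp d), cnt (cp d) = 1 & exists2 y, y \in P & (g y = cp d /\ t d y)].
  move=> d dP nb; rewrite /cp; case: ifP => hd.
    split=> //.
      by have := cnt_gt0 d hd; move: nb; rewrite /big; lia.
    have [y yP gy] := imgP d hd; exists y => //; split=> //.
    by rewrite tsym -gy; have [] := vg y yP.
  case: pickP => [y /andP[yP dy] | none] /=; last first.
    by have [y yP dy] := domP d dP; have := none y; rewrite yP dy.
  split; first exact: (imgg).
    apply: (Max d) => //; apply/imsetP=> [[x xP E]].
    by move: hd; rewrite E imgg.
  by exists y.
have fD : forall v, v \in P -> f v = S2Dart (toW (g v)) (toW (g (m v))).
  by move=> v vP; rewrite /f vP.
have fO : forall v, v \notin P -> big v -> f v = S2Orig (toW v).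
  by move=> v vP bv; rewrite /f (negbTE vP) bv.
have fC : forall v, v \notin P -> ~~ big v ->
    f v = S2Copy (toW (cp v)) (index v (enum (cset (cp v)))).+1.
  by move=> v vP bv; rewrite /f (negbTE vP) (negbTE bv).
have bigImg : forall v, big v -> inImg v by move=> v bv; apply: cnt_img; apply: ltnW.
have eFsym : forall w1 w2, eF w1 w2 -> eF w2 w1.
  move=> w1 w2 /exists_inP[x xP /andP[g1 g2]]; have [mP _ mm] := mS x xP.
  by apply/exists_inP; exists (m x); rewrite // mm g1 g2.
exists W, eF, alpha, f; split.
- split; first split.
  + by move=> w1 w2; apply/idP/idP; apply: eFsym.
  + move=> w; apply/negbTE/negP => /exists_inP[x xP /andP[/eqP a1 /eqP a2]].
    by move: (G2 x xP); rewrite a1 a2 eqxx.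
  + move=> p sp up; apply/negP => cyc.
    apply: (@lift_cycle V t P m g tsym tacyc mS vg (map val p)).
    * by rewrite map_inj_uniq //; apply: val_inj.
    * by rewrite size_map.
    * by rewrite cycle_map.
- by move=> w; rewrite degE; apply: cnt_gt0; apply: valW.
- move=> w /leafE nb; rewrite /alpha card_gt0; apply/set0Pn; exists (val w).
  by rewrite inE imgNP ?valW // nb /cp valW eqxx.
- split.
  + move=> v1 v2.
    case: (boolP (v1 \in P)) => v1P; [rewrite (fD v1 v1P) | case: (boolP (big v1)) => b1;
      [rewrite (fO v1 v1P b1) | rewrite (fC v1 v1P b1)]];
    (case: (boolP (v2 \in P)) => v2P; [rewrite (fD v2 v2P) | case: (boolP (big v2)) => b2;
      [rewrite (fO v2 v2P b2) | rewrite (fC v2 v2P b2)]]); try by case.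
    * case=> /toW_inj e1 /toW_inj e2; have [m1P _ _] := mS v1 v1P; have [m2P _ _] := mS v2 v2P.
      by apply: G3 => //; [apply: e1 | apply: e2]; apply: (imgg).
    * by case=> /toW_inj; apply; apply: bigImg.
    * case=> /toW_inj e1 e2; have [c1 _ _] := cpS v1 v1P b1; have [c2 _ _] := cpS v2 v2P b2.
      move: e2; rewrite (e1 c1 c2) => e2.
      have m1 : v1 \in enum (cset (cp v2)) by rewrite mem_enum inE v1P b1 (e1 c1 c2) eqxx.
      have m2 : v2 \in enum (cset (cp v2)) by rewrite mem_enum inE v2P b2 eqxx.
      by rewrite -(nth_index v1 m1) e2 nth_index.
  + move=> z; split.
    * case: z => [w|w i|w1 w2] /=.
      - move=> lw; have bw : big (val w) by apply/negPn/negP => nb; apply: lw; apply/leafE.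
        by exists (val w); rewrite fO ?toWv // imgNP ?valW.
      - case=> lw /andP[i1 ia]; have nb := (iffLR (leafE w) lw).
        pose S := cset (val w).
        pose d := nth (val w) (enum S) i.-1.
        have di : i.-1 < size (enum S) by rewrite -cardE /S; rewrite /alpha -(prednK i1) in ia.
        have : d \in S by rewrite -mem_enum mem_nth.
        rewrite inE => /andP[/andP[dP nbd] /eqP cpd].
        exists d; rewrite fC // cpd toWv index_uniq ?enum_uniq //.
        by rewrite prednK.
      - case/exists_inP=> x xP /andP[/eqP gx /eqP gmx].
        by exists x; rewrite fD // gx gmx !toWv.
    * case=> v <-; case: (boolP (v \in P)) => vP.
        rewrite fD //=; apply/exists_inP; exists v => //.
        have [mP _ _] := mS v vP.
        by rewrite !toWK ?eqxx //; apply: (imgg).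
      case: (boolP (big v)) => bv.
        by rewrite fO //= => /leafE; rewrite toWK ?bv //; apply: bigImg.
      rewrite fC //=; have [ci c1 _] := cpS v vP bv.
      split; first by apply/leafE; rewrite toWK // /big c1.
      rewrite /alpha toWK //.
      by rewrite cardE index_mem mem_enum inE vP bv eqxx.
  + have one : forall a b, S2edge0 eF alpha (f a) (f b) -> t a b.
      move=> a b.
      case: (boolP (a \in P)) => aP; [rewrite (fD a aP) | case: (boolP (big a)) => ba;
        [rewrite (fO a aP ba) | rewrite (fC a aP ba)]];
      (case: (boolP (b \in P)) => bP; [rewrite (fD b bP) | case: (boolP (big b)) => bb;
        [rewrite (fO b bP bb) | rewrite (fC b bP bb)]]) => //=.
      * case=> _ [e1 e2].
        have [mP ta mm] := mS a aP; have [mbP _ _] := mS b bP.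
        have E : b = m a.
          apply: G3 => //.
            by apply: toW_inj e2; apply: (imgg).
          by rewrite mm; apply: toW_inj e1; apply: (imgg).
        by rewrite E.
      * case=> _ [_ e]; have := toW_inj _ _ (imgg _ bP) (bigImg _ ba) e => <-.
        by rewrite tsym; have [] := vg b bP.
      * case=> _ [_ [_ e]]; have [ci c1 [y yP [gy ay]]] := cpS a aP ba.
        have := toW_inj _ _ (imgg _ bP) ci e => gb.
        move/eqP/cards1P: c1 => [z Ez].
        have : y \in [set x in P | g x == cp a] by rewrite inE yP gy eqxx.
        have : b \in [set x in P | g x == cp a] by rewrite inE bP gb eqxx.
        by rewrite Ez !inE => /eqP-> /eqP <-.
    by move=> a b [/one //|/one]; rewrite tsym.
- apply: eq_card => v; rewrite inE /f; case: ifP => // _; by case: ifP.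
Qed.
End Construct.

Unset Implicit Arguments.

Theorem proposition7p1 (V : finType) (t : rel V) (Htree : is_tree t) :
  DPDP t <->
  exists (W : finType) (eF : rel W) (alpha : W -> nat) (f : V -> s2v W),
    [/\ is_forest eF, no_isolated eF, ~ has_good_subgraph eF,
        (forall w, is_leaf eF w -> 0 < alpha w) &
        spanning_supergraph t (S2vert eF alpha) (S2adj eF alpha) f].
Proof.
have tS : simple_graph t by case: Htree.
split.
- move=> /(DPDP_DP tS) [P [m H]].
  suff : forall n (P : {set V}) (m : V -> V), #|P| <= n -> DP t P m ->
    exists (W : finType) (eF : rel W) (alpha : W -> nat) (f : V -> s2v W),
    [/\ is_forest eF, no_isolated eF, ~ has_good_subgraph eF,
        (forall w, is_leaf eF w -> 0 < alpha w) &
        spanning_supergraph t (S2vert eF alpha) (S2adj eF alpha) f].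
    by move=> /(_ _ P m (leqnn _) H).
  elim=> [|n IH] P0 m0 cn H0;
  have [W [eF [alpha [f [forest noiso apos span cE]]]]] := @construct V t P0 m0 Htree H0;
  (case: (classic (has_good_subgraph eF)) => [[q gq]|ng]; last by exists W, eF, alpha, f);
  have [P' [m' [H' lt]]] := @reduce V W t eF alpha f q tS forest.1 apos noiso span gq;
  rewrite cE in lt.
    lia.
  by apply: (IH P' m') => //; lia.
- case=> W [eF [alpha [f [[eS _] noiso _ apos span]]]].
  have [m Hm] := back tS eS.1 noiso apos span.
  exact: DP_DPDP tS _ _ Hm.
Qed.
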